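(* Let $G$ be a subgroup of $S_n$, $\chi$ a character of $G$, $\theta,\tau\in S_n$ and $a,b\in\mathbb{C}$. Then $$d_\chi^G(aP_\theta+bP_\tau)=(a+b)^F\sum_{\sigma\in X(\theta,\tau)\cap G}\overline{\chi(\sigma)}\,a^{\,n-t_\sigma-F}\,b^{\,t_\sigma},$$ where $t_\sigma=n-|\operatorname{Fix}(\theta^{-1}\sigma)|$ and $F=|\operatorname{Fix}(\theta^{-1}\tau)|$.
   Context: $S_n$ is the symmetric group on $[n]=\{1,\dots,n\}$. A character $\chi$ of $G$ is $\chi(g)=\operatorname{tr}\rho(g)$ for a representation $\rho:G\to GL(V)$ on a finite-dimensional complex vector space. The generalized matrix function is $d_\chi^G(A)=\sum_{\sigma\in G}\chi(\sigma)\prod_{i=1}^n A_{i\,\sigma(i)}$ for $A\in M_n(\mathbb{C})$. For $\theta\in S_n$, the permutation matrix $P_\theta$ has $(P_\theta)_{ij}=1$ if $\theta^{-1}(i)=j$ and $0$ otherwise. $\operatorname{Fix}(\pi)$ is the set of fixed points of $\pi$. $X(\theta,\tau)=\{\sigma\in S_n \mid \text{for each } i\in[n],\ \sigma(i)=\theta(i)\text{ or }\sigma(i)=\tau(i)\}$. *)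

(* Defs.v *)
From HB Require Import structures.
From mathcomp Require Import all_boot all_order all_algebra all_fingroup.
From mathcomp Require Import mxrepresentation.
Set Implicit Arguments. Unset Strict Implicit. Unset Printing Implicit Defensive.
Import GRing.Theory Num.Theory.
Local Open Scope ring_scope.

Definition pmat (C : nzRingType) (n : nat) (theta : 'S_n) : 'M[C]_n :=
  \matrix_(i, j) ((theta^-1)%g i == j)%:R.

Definition gmf (C : nzRingType) (n : nat) (G : {set 'S_n}) (chi : 'S_n -> C)
  (A : 'M[C]_n) : C :=
  \sum_(s in G) chi s * \prod_(i < n) A i (s i).

Definition Fix (n : nat) (p : 'S_n) : {set 'I_n} := [set i | p i == i].

Definition Xset (n : nat) (theta tau : 'S_n) : {set 'S_n} :=
  [set s : 'S_n | [forall i, (s i == theta i) || (s i == tau i)]].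

(* Composition as functions: (theta^{-1} o s) is (s * theta^-1)%g in MathComp,
   since (p * q) x = q (p x). *)
Definition tcnt (n : nat) (theta s : 'S_n) : nat := (n - #|Fix (s * theta^-1)%g|)%N.

(* Main.v *)
Require Import Defs.
From HB Require Import structures.
From mathcomp Require Import all_boot all_order all_algebra all_fingroup.
From mathcomp Require Import mxrepresentation.
From mathcomp Require Import all_field zify.
Import GRing.Theory Num.Theory.
Local Open Scope ring_scope.

Lemma root1_conj (C : numClosedFieldType) (d : C) k :
  (0 < k)%N -> d ^+ k = 1 -> d^-1 = d^*.
Proof.
move=> k0 dk.
have: `|d| ^+ k == 1 by rewrite -normrX dk normr1.
rewrite pexpr_eq1 // => /eqP n1.
by rewrite invC_norm n1 expr1n invr1 mul1r.
Qed.

Lemma sep_Xn1 (C : numClosedFieldType) k : (0 < k)%N ->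
  separable_poly ('X^k - 1 : {poly C}).
Proof.
move=> k0; rewrite unlock; apply/Bezout_coprimepP.
exists (-1, (k%:R)^-1 *: 'X) => /=.
rewrite derivB derivXn derivC subr0.
have kn0 : (k%:R : C) != 0 by rewrite pnatr_eq0 -lt0n.
rewrite -scalerAl mulrnAr -scaler_nat scalerA mulVf // scale1r.
rewrite -exprS prednK // mulN1r opprB subrK.
exact: eqpxx.
Qed.

Lemma tr_inv_conj (C : numClosedFieldType) m (A : 'M[C]_m.+1) k :
  (0 < k)%N -> A ^+ k = 1 -> \tr (invmx A) = (\tr A)^*.
Proof.
move=> k0 Ak.
have [rs Hrs] := closed_field_poly_normal ('X^k - 1 : {poly C}).
rewrite lead_coefXnsubC // scale1r in Hrs.
have urs : uniq rs by rewrite -separable_prod_XsubC -Hrs sep_Xn1.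
have mind : mxminpoly A %| 'X^k - 1.
  apply: mxminpoly_min.
  by rewrite rmorphB /= rmorphXn /= horner_mx_X rmorph1 Ak subrr.
have mind' : mxminpoly A %| \prod_(x <- rs) ('X - x%:P) by rewrite -Hrs.
have [P Pu /diagonalizable_forPex [D HD]] :=
  (diagonalizableP A).2 (ex_intro2 _ _ rs urs mind').
have HA : A = invmx P *m diag_mx D *m P.
  move/(simmxP Pu): HD => HD.
  by rewrite -mulmxA -HD mulKmx.
have Dk : forall j, D 0 j ^+ k = 1.
  move=> j.
  have : root ('X^k - 1) (D 0 j).
    apply: root_dvdp mind _.
    rewrite (simmx_minpoly Pu HD) mxminpoly_diag root_prod_XsubC mem_undup.
    by apply: map_f; rewrite mem_enum.
  by rewrite rootE !hornerE subr_eq0 => /eqP.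
pose D' := \row_j (D 0 j)^*.
have HB : A *m (invmx P *m diag_mx D' *m P) = 1%:M.
  rewrite HA !mulmxA mulmxK // -(mulmxA (invmx P)) mul_diag_mx.
  have -> : (\matrix_(i, j) (D 0 i * diag_mx D' i j)) = 1%:M.
    apply/matrixP => i j; rewrite !mxE.
    case: (eqVneq i j) => [->|nij]; last by rewrite mulr0.
    have dn0 : D 0 j != 0.
      apply/eqP => d0; move: (Dk j); rewrite d0 expr0n gtn_eqF //.
      by move/eqP; rewrite eq_sym oner_eq0.
    have -> : (D 0 j)^* = (D 0 j)^-1 by rewrite (@root1_conj _ _ _ k0 (Dk j)).
    change (D 0 j * ((D 0 j)^-1 *+ 1) = 1%:R).
    by rewrite mulr1n (mulfV dn0).
  rewrite mulmx1; exact: (mulVmx Pu).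
have Au : A \in unitmx by case: (mulmx1_unit HB).
have -> : invmx A = invmx P *m diag_mx D' *m P.
  rewrite -[RHS](mulKmx Au) HB; exact: (esym (mulmx1 _)).
rewrite HA (mxtrace_mulC (invmx P *m diag_mx D)) (mxtrace_mulC (invmx P *m diag_mx D')) !mulmxA (mulmxV Pu) !mul1mx.
rewrite !mxtrace_diag rmorph_sum.
apply: eq_bigr => j _; rewrite mxE; reflexivity.
Qed.

Lemma permV_eq n (p : 'S_n) x j : ((p^-1)%g x == j) = (x == p j).
Proof. by apply/eqP/eqP => [<-|->]; rewrite ?permKV ?permK. Qed.

Lemma prod_lemma (C : comNzRingType) n (theta tau s : 'S_n) (a b : C) :
  \prod_(i < n) (a *: pmat C theta + b *: pmat C tau) i ((s^-1)%g i) =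
  if s \in Xset theta tau then
    (a + b) ^+ #|Fix (tau * theta^-1)%g| *
    a ^+ (n - tcnt theta s - #|Fix (tau * theta^-1)%g|) * b ^+ (tcnt theta s)
  else 0.
Proof.
rewrite (reindex_inj (@perm_inj _ s)) /=.
under eq_bigr => j _ do rewrite permK !mxE !permV_eq.
rewrite inE; case: forallP => [sX|/forallP sX]; last first.
  move/forallPn: sX => [j Hj].
  rewrite (bigD1 j) //=; move: Hj; rewrite negb_or => /andP[/negbTE -> /negbTE ->].
  by rewrite !mulr0 addr0 mul0r.
rewrite (bigID (fun j => theta j == tau j)) /=.
rewrite (eq_bigr (fun=> a + b)); last first.
  move=> j /eqP ej; case/orP: (sX j) => /eqP e; rewrite e ?ej !eqxx ?mulr1 //.
rewrite (bigID (fun j => s j == theta j) (fun j => theta j != tau j)) /=.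
rewrite [X in _ * (X * _)](eq_bigr (fun=> a)); last first.
  move=> j /andP[ne /eqP ->]; by rewrite eqxx (negbTE ne) mulr1 mulr0 addr0.
rewrite [X in _ * (_ * X)](eq_bigr (fun=> b)); last first.
  move=> j /andP[ne ns]; have:= sX j; rewrite (negbTE ns) /= => ->.
  by rewrite mulr1 mulr0 add0r.
rewrite !prodr_const.
have hF : #|Fix (tau * theta^-1)%g| = #|(fun i : 'I_n => theta i == tau i)|.
  by apply: eq_card => i; rewrite !inE permM permV_eq eq_sym.
have hT : #|Fix (s * theta^-1)%g| = #|(fun i : 'I_n => s i == theta i)|.
  by apply: eq_card => i; rewrite !inE permM permV_eq.
rewrite /tcnt hT hF mulrA.
have sX' : forall i, theta i == tau i -> s i == theta i.
  move=> i /eqP e; case/orP: (sX i) => //; by rewrite e.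
have hS : #|(fun i : 'I_n => s i == theta i)| =
   (#|(fun i : 'I_n => theta i == tau i)| +
    #|(fun i : 'I_n => (theta i != tau i) && (s i == theta i))|)%N.
  rewrite -(cardID (fun i : 'I_n => theta i == tau i)
                   (fun i : 'I_n => s i == theta i)).
  congr (_ + _)%N; apply: eq_card => i; rewrite !inE !unfold_in /=.
    by case E: (theta i == tau i); [rewrite andbT sX' | rewrite andbF].
have hC : (#|(fun i : 'I_n => s i == theta i)| +
    #|(fun i : 'I_n => (theta i != tau i) && (s i != theta i))|)%N = n.
  rewrite -[RHS]card_ord -(cardC (fun i : 'I_n => s i == theta i)).
  congr (_ + _)%N; apply: eq_card => i; rewrite !inE !unfold_in /=.
  case E: (theta i == tau i) => //=.
  by rewrite (sX' i E).
congr (_ * _ ^+ _ * _ ^+ _).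
all: move: hS hC.
all: set x1 := #|(fun i : 'I_n => s i == theta i)|.
all: set x2 := #|(fun i : 'I_n => theta i == tau i)|.
all: set x3 := #|(fun i : 'I_n => (theta i != tau i) && (s i == theta i))|.
all: set x4 := #|(fun i : 'I_n => (theta i != tau i) && (s i != theta i))|.
all: lia.
Qed.
Lemma chi_inv (C : numClosedFieldType) n (G : {group 'S_n}) m
  (rG : mx_representation C G m) s :
  s \in G -> \tr (rG (s^-1)%g) = (\tr (rG s))^*.
Proof.
move=> sG; rewrite repr_mxV //.
case: m rG => [|m] rG.
  by rewrite /mxtrace !big_ord0 conjC0.
apply: (@tr_inv_conj C m (rG s) #[s]%g (order_gt0 s)).
have HX : forall k, rG (s ^+ k)%g = rG s ^+ k.
  elim=> [|k IH]; first by rewrite expg0 repr_mx1.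
  by rewrite expgS repr_mxM ?groupX // IH exprS mulmxE.
by rewrite -HX expg_order repr_mx1.
Qed.

Theorem theorem3p2 (C : numClosedFieldType) (n : nat) (G : {group 'S_n})
    (m : nat) (rG : mx_representation C G m) (theta tau : 'S_n) (a b : C) :
  let chi := fun g : 'S_n => \tr (rG g) in
  let F := #|Fix (tau * theta^-1)%g| in
  gmf G chi (a *: pmat C theta + b *: pmat C tau) =
    (a + b) ^+ F *
    \sum_(s in Xset theta tau :&: G)
       (chi s)^* * a ^+ (n - tcnt theta s - F) * b ^+ (tcnt theta s).
Proof.
move=> chi F; rewrite /gmf.
rewrite (reindex_inj invg_inj) /=.
rewrite (eq_bigl (fun s => (s \in G))); last first.
  by move=> s; rewrite groupV.
rewrite mulr_sumr.
rewrite [RHS](eq_bigl (fun s => (s \in G) && (s \in Xset theta tau))); last first.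
  by move=> s; rewrite in_setI andbC.
rewrite big_mkcondr /=.
apply: eq_bigr => s sG.
rewrite prod_lemma /chi chi_inv // -/F.
case: ifP => _; last by rewrite mulr0.
by rewrite !mulrA; congr (_ * _ * _); exact: mulrC.
Qed.
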